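(* Let $n\neq 0,-1$ be an integer and $M$ the graph manifold obtained by $4$-surgery along the $n$-twist knot $K_n$. Every irreducible representation $\bar\rho:\pi_1(M)\to SL(2,\mathbb{C})$ is determined, up to conjugation, by the eigenvalues of $\bar\rho(\mu)$, where $\mu$ is the meridian of the torus knot exterior $E_{T(2,2n+1)}\subset M$.
   Context: The $n$-twist knot $K_n$ is the two-bridge knot whose group has the presentation $\pi_1(E_{K_n})=\langle \alpha,\beta\mid \omega^n\alpha=\beta\omega^n\rangle$ with $\alpha,\beta$ meridians and $\omega=\beta\alpha^{-1}\beta^{-1}\alpha$; its Alexander polynomial is $-nt^2+(2n+1)t-n$, and $K_1$ is the figure-eight knot. The manifold $M$ obtained by $4$-surgery along $K_n$ is the union of the torus knot exterior $E_{T(2,2n+1)}$ and the twisted $I$-bundle $N(Kb)$ over the Klein bottle along a torus, with $\pi_1(M)=\langle a,b,x,y\mid a^2=b^{2n+1},\ x^{-1}yx=y^{-1},\ \mu=y^{-1},\ h=y^{-1}x^2\rangle$, where $\mu=b^{-n}a$ is a meridian and $h$ a regular fiber of $E_{T(2,2n+1)}$. A representation is irreducible if the only subspaces of $\mathbb{C}^2$ invariant under its image are $\{0\}$ and $\mathbb{C}^2$. *)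

(* Defs.v *)
From HB Require Import structures.
From mathcomp Require Import all_boot all_order all_algebra.
From mathcomp Require Import complex.
From mathcomp Require Import reals.
Set Implicit Arguments.
Unset Strict Implicit.
Unset Printing Implicit Defensive.
Import Order.TTheory GRing.Theory Num.Theory.
Local Open Scope ring_scope.

Section TwistSurgeryReps.
Variable R : realType.
Local Notation C := (R[i]).
Local Notation M2 := ('M[C]_2).

Definition is_SL2 (g : M2) : Prop := \det g = 1.

(* In pi_1(M) = <a,b,x,y | a^2 = b^(2n+1), x^-1 y x = y^-1, mu = y^-1, h = y^-1 x^2>,
   mu = b^(-n) a is the meridian and h = a^2 (= b^(2n+1)) the regular fiber
   of the torus knot exterior E_{T(2,2n+1)}. *)
Definition mu_word (n : int) (a b : M2) : M2 := b ^ (- n) * a.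
Definition fiber_word (a : M2) : M2 := a ^+ 2.

(* A homomorphism pi_1(M) -> SL(2,C) is the same as an assignment of the
   generators a, b, x, y to SL(2,C) matrices satisfying the defining relations. *)
Record rep (n : int) := Rep {
  rho_a : M2; rho_b : M2; rho_x : M2; rho_y : M2;
  rho_a_SL : is_SL2 rho_a;
  rho_b_SL : is_SL2 rho_b;
  rho_x_SL : is_SL2 rho_x;
  rho_y_SL : is_SL2 rho_y;
  rel_torus : rho_a ^+ 2 = rho_b ^ (2 * n + 1);
  rel_klein : rho_x ^-1 * rho_y * rho_x = rho_y ^-1;
  rel_mu : mu_word n rho_a rho_b = rho_y ^-1;
  rel_h : fiber_word rho_a = rho_y ^-1 * rho_x ^+ 2
}.

Definition rho_mu (n : int) (r : rep n) : M2 := mu_word n (rho_a r) (rho_b r).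

Inductive in_image (n : int) (r : rep n) : M2 -> Prop :=
  | img_one : in_image r 1
  | img_mul g s : in_image r g -> s \in [:: rho_a r; rho_b r; rho_x r; rho_y r] ->
      in_image r (g * s)
  | img_mulV g s : in_image r g -> s \in [:: rho_a r; rho_b r; rho_x r; rho_y r] ->
      in_image r (g * s ^-1).

Definition irreducible_rep (n : int) (r : rep n) : Prop :=
  forall W : {vspace 'cV[C]_2},
    (forall g, in_image r g -> forall v, v \in W -> g *m v \in W) ->
    W = 0%VS \/ W = fullv.

Definition conj_reps (n : int) (r1 r2 : rep n) : Prop :=
  exists P : M2, P \is a GRing.unit /\
    [/\ rho_a r2 = P^-1 * rho_a r1 * P, rho_b r2 = P^-1 * rho_b r1 * P,
        rho_x r2 = P^-1 * rho_x r1 * P & rho_y r2 = P^-1 * rho_y r1 * P].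

End TwistSurgeryReps.

(* Main.v *)
Require Import Defs.
From HB Require Import structures.
From mathcomp Require Import all_boot all_order all_algebra.
From mathcomp Require Import complex.
From mathcomp Require Import reals.
From mathcomp Require Import ring.
From Stdlib Require Import Classical_Prop.
Import Order.TTheory GRing.Theory Num.Theory.
Local Open Scope ring_scope.
Set Implicit Arguments.
Unset Strict Implicit.
Unset Printing Implicit Defensive.

Section Mx.
Variable F : fieldType.
Local Notation M2 := ('M[F]_2).

Definition mx2 (a b c d : F) : M2 := \matrix_(i < 2, j < 2)
  if i == 0 :> nat then (if j == 0 :> nat then a else b)
  else (if j == 0 :> nat then c else d).

Lemma mx2E (M : M2) : M = mx2 (M 0 0) (M 0 1) (M 1 0) (M 1 1).
Proof.
apply/matrixP => i j; rewrite mxE.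
case: i => [[|[|i]] Hi] //=; case: j => [[|[|j]] Hj] //=;
  by congr (M _ _); apply/val_inj.
Qed.

Lemma mul_mx2 a b c d e f g h :
  mx2 a b c d * mx2 e f g h = mx2 (a*e+b*g) (a*f+b*h) (c*e+d*g) (c*f+d*h).
Proof.
apply/matrixP => i j; rewrite !mxE !big_ord_recl big_ord0 !mxE /=.
by case: i => [[|[|i]] Hi] //=; case: j => [[|[|j]] Hj] //=; rewrite addr0.
Qed.

Lemma mx2_inj a b c d e f g h :
  mx2 a b c d = mx2 e f g h -> [/\ a = e, b = f, c = g & d = h].
Proof.
move=> E; have := congr1 (fun M : M2 => (M 0 0, M 0 1, M 1 0, M 1 1)) E.
by rewrite !mxE /= => -[-> -> -> ->].
Qed.

Lemma scalar_mx2 a : a%:M = mx2 a 0 0 a :> M2.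
Proof.
apply/matrixP => i j; rewrite !mxE.
by case: i => [[|[|i]] Hi] //=; case: j => [[|[|j]] Hj] //=.
Qed.

Lemma one_mx2 : 1 = mx2 1 0 0 1 :> M2.
Proof. by rewrite -scalar_mx2. Qed.

Lemma add_mx2 a b c d e f g h :
  mx2 a b c d + mx2 e f g h = mx2 (a+e) (b+f) (c+g) (d+h).
Proof.
apply/matrixP => i j; rewrite !mxE.
by case: i => [[|[|i]] Hi] //=; case: j => [[|[|j]] Hj] //=.
Qed.

Lemma scale_mx2 k a b c d : k *: mx2 a b c d = mx2 (k*a) (k*b) (k*c) (k*d).
Proof.
apply/matrixP => i j; rewrite !mxE.
by case: i => [[|[|i]] Hi] //=; case: j => [[|[|j]] Hj] //=.
Qed.

Lemma opp_mx2 a b c d : - mx2 a b c d = mx2 (-a) (-b) (-c) (-d).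
Proof.
apply/matrixP => i j; rewrite !mxE.
by case: i => [[|[|i]] Hi] //=; case: j => [[|[|j]] Hj] //=.
Qed.

Lemma det_mx2 a b c d : \det (mx2 a b c d) = a * d - b * c.
Proof.
rewrite (expand_det_row _ 0) !big_ord_recl big_ord0 /cofactor !mxE /=.
rewrite !det_mx11 !mxE /=. rewrite /bump /= expr0 expr1; ring. Qed.


Lemma eq_via (k x y u v : F) : x = y -> u - v = k * (x - y) -> u = v.
Proof. by move=> -> ; rewrite subrr mulr0 => /eqP; rewrite subr_eq0 => /eqP. Qed.

Arguments eq_via k [x y u v].
Lemma mx2_eq a b c d e f g h :
  a = e -> b = f -> c = g -> d = h -> mx2 a b c d = mx2 e f g h.
Proof. by move=> -> -> -> ->. Qed.

Lemma commutant (M N : M2) : N * M = M * N ->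
  (exists k, M = k%:M) \/ (exists p q, N = p *: M + q%:M).
Proof.
rewrite [M]mx2E [N]mx2E.
move: (M 0 0) (M 0 1) (M 1 0) (M 1 1) (N 0 0) (N 0 1) (N 1 0) (N 1 1)
  => a b c d e f g h.
rewrite !mul_mx2 => /mx2_inj[E1 E2 E3 E4].

have [b0|bnz] := eqVneq b 0.
  have [c0|cnz] := eqVneq c 0.
    have [ad|adnz] := eqVneq a d.
      by left; exists a; rewrite scalar_mx2 b0 c0 ad.
    have adnz' : a - d != 0 by rewrite subr_eq0.
    right; exists ((e - h)/(a-d)), (e - (e-h)/(a-d)*a).
    rewrite scale_mx2 scalar_mx2 add_mx2; apply: mx2_eq.
    - field; exact adnz'.
    - apply: (eq_via (-1/(a-d)) E2); rewrite b0; field; exact adnz'.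
    - apply: (eq_via (1/(a-d)) E3); rewrite c0; field; exact adnz'.
    - field; exact adnz'.
  right; exists (g/c), (e - g/c*a).
  rewrite scale_mx2 scalar_mx2 add_mx2; apply: mx2_eq.
  - field; exact cnz.
  - apply: (eq_via (1/c) E1); field; exact cnz.
  - field; exact cnz.
  - apply: (eq_via (1/c) E3); field; exact cnz.
right; exists (f/b), (e - f/b*a).
rewrite scale_mx2 scalar_mx2 add_mx2; apply: mx2_eq.
- field; exact bnz.
- field; exact bnz.
- apply: (eq_via (-1/b) E1); field; exact bnz.
- apply: (eq_via (-1/b) E2); field; exact bnz.
Qed.


Definition vec2 (a b : F) : 'cV[F]_2 := \col_(i < 2) if i == 0 :> nat then a else b.
Definition row2 (a b : F) : 'rV[F]_2 := \row_(i < 2) if i == 0 :> nat then a else b.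

Lemma vec2E (v : 'cV[F]_2) : v = vec2 (v 0 0) (v 1 0).
Proof.
apply/matrixP => i j; rewrite mxE; rewrite (ord1 j).
case: i => [[|[|i]] Hi] //=; by congr (v _ _); apply/val_inj.
Qed.

Lemma row2E (v : 'rV[F]_2) : v = row2 (v 0 0) (v 0 1).
Proof.
apply/matrixP => i j; rewrite mxE; rewrite (ord1 i).
case: j => [[|[|j]] Hj] //=; by congr (v _ _); apply/val_inj.
Qed.

Lemma mul_mx2_vec2 a b c d x y :
  mx2 a b c d *m vec2 x y = vec2 (a*x+b*y) (c*x+d*y).
Proof.
apply/matrixP => i j; rewrite !mxE !big_ord_recl big_ord0 !mxE /=.
by case: i => [[|[|i]] Hi] //=; rewrite addr0.
Qed.

Lemma mul_row2_mx2 a b c d x y :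
  row2 x y *m mx2 a b c d = row2 (x*a+y*c) (x*b+y*d).
Proof.
apply/matrixP => i j; rewrite !mxE !big_ord_recl big_ord0 !mxE /=.
by case: j => [[|[|j]] Hj] //=; rewrite addr0.
Qed.

Lemma scale_vec2 k a b : k *: vec2 a b = vec2 (k*a) (k*b).
Proof.
apply/matrixP => i j; rewrite !mxE.
by case: i => [[|[|i]] Hi] //=.
Qed.

Lemma scale_row2 k a b : k *: row2 a b = row2 (k*a) (k*b).
Proof.
apply/matrixP => i j; rewrite !mxE.
by case: j => [[|[|j]] Hj] //=.
Qed.

Lemma vec2_inj a b c d : vec2 a b = vec2 c d -> a = c /\ b = d.
Proof.
move=> E; have := congr1 (fun v : 'cV[F]_2 => (v 0 0, v 1 0)) E.
by rewrite !mxE /= => -[-> ->].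
Qed.

Lemma row2_inj a b c d : row2 a b = row2 c d -> a = c /\ b = d.
Proof.
move=> E; have := congr1 (fun v : 'rV[F]_2 => (v 0 0, v 0 1)) E.
by rewrite !mxE /= => -[-> ->].
Qed.

Lemma vec2_eq0 a b : (vec2 a b == 0) = (a == 0) && (b == 0).
Proof.
apply/eqP/andP => [E|[/eqP-> /eqP->]].
  have := congr1 (fun v : 'cV[F]_2 => (v 0 0, v 1 0)) E.
  by rewrite !mxE /= => -[-> ->].
by apply/matrixP => i j; rewrite !mxE; case: i => [[|[|i]] Hi].
Qed.

Lemma row2_eq0 a b : (row2 a b == 0) = (a == 0) && (b == 0).
Proof.
apply/eqP/andP => [E|[/eqP-> /eqP->]].
  have := congr1 (fun v : 'rV[F]_2 => (v 0 0, v 0 1)) E.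
  by rewrite !mxE /= => -[-> ->].
by apply/matrixP => i j; rewrite !mxE; case: j => [[|[|j]] Hj].
Qed.

Lemma inv_mx2 a b c d : a * d - b * c = 1 ->
  (mx2 a b c d)^-1 = mx2 d (-b) (-c) a.
Proof.
move=> dt.
have h1 : mx2 a b c d * mx2 d (-b) (-c) a = 1.
  rewrite mul_mx2 one_mx2; apply: mx2_eq; (try rewrite -dt); ring.
have h2 : mx2 d (-b) (-c) a * mx2 a b c d = 1.
  rewrite mul_mx2 one_mx2; apply: mx2_eq; (try rewrite -dt); ring.
have u : mx2 a b c d \is a GRing.unit by apply/unitrP; exists (mx2 d (-b) (-c) a).
by rewrite -[LHS]mulr1 -h1 mulKr.
Qed.

Lemma sq1_scalar (two : (2 : F) != 0) (Y : M2) : \det Y = 1 -> Y * Y = 1 ->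
  exists k, Y = k%:M.
Proof.
rewrite [Y]mx2E; move: (Y 0 0) (Y 0 1) (Y 1 0) (Y 1 1) => a b c d.
rewrite det_mx2 mul_mx2 one_mx2 => dt /mx2_inj [E1 E2 E3 E4].
have [s0|snz] := eqVneq (a + d) 0.
  exfalso; move/eqP: two; apply.
  have -> : (2 : F) = (a*a + b*c) + (a*d - b*c) - a * (a + d) by rewrite E1 dt s0; ring.
  by ring.
have b0 : b = 0.
  apply: (mulIf snz); rewrite mul0r -E2; ring.
have c0 : c = 0.
  apply: (mulIf snz); rewrite mul0r -E3; ring.
move: E1 dt; rewrite b0 c0 mulr0 subr0 addr0 => E1 dt.
have anz : a != 0 by apply/eqP => a0; move: E1; rewrite a0 mulr0 => /eqP; rewrite eq_sym oner_eq0.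
have da : d = a by apply: (mulfI anz); rewrite dt E1.
by exists a; rewrite scalar_mx2 da.
Qed.

Lemma invr_eig (N : M2) (v : 'cV[F]_2) c : N \is a GRing.unit -> v != 0 ->
  N *m v = c *: v -> c != 0 /\ N^-1 *m v = c^-1 *: v.
Proof.
move=> uN vnz E.
have E' : v = c *: (N^-1 *m v).
  by rewrite scalemxAr -E mulmxA -[N^-1 *m N]/(N^-1 * N) mulVr // mul1mx.
have cnz : c != 0 by apply: contra_neq vnz => c0; rewrite E' c0 scale0r.
split => //; by rewrite {2}E' scalerA mulVf // scale1r.
Qed.

Lemma unitXz (N : M2) (k : int) : N \is a GRing.unit -> N ^ k \is a GRing.unit.
Proof. by move=> u; case: k => m /=; [apply: unitrX | rewrite unitrV; apply: unitrX]. Qed.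

Lemma expX_eig (N : M2) (v : 'cV[F]_2) c (m : nat) :
  N *m v = c *: v -> N ^+ m *m v = c ^+ m *: v.
Proof.
move=> E; elim: m => [|m IH]; first by rewrite !expr0 mul1mx scale1r.
by rewrite exprS -mulmxE -mulmxA IH -scalemxAr E scalerA -exprSr.
Qed.

Lemma expz_eig (N : M2) (v : 'cV[F]_2) c (k : int) : N \is a GRing.unit -> v != 0 ->
  N *m v = c *: v -> N ^ k *m v = c ^ k *: v.
Proof.
move=> u vnz E; case: k => m /=; first exact: expX_eig.
have := @invr_eig (N ^+ m.+1) v (c ^+ m.+1) (unitrX _ u) vnz (expX_eig _ E).
by case.
Qed.

End Mx.

Section Closed.
Variable F : closedFieldType.
Local Notation M2 := ('M[F]_2).

Lemma eig_exists (M : M2) : exists2 v : 'cV[F]_2, v != 0 & exists l, M *m v = l *: v.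
Proof.
have /closed_rootP [l hl] : size (char_poly M^T) != 1 by rewrite size_char_poly.
have /eigenvalueP [u hu unz] : eigenvalue M^T l by rewrite eigenvalue_root_char.
exists u^T; first by rewrite trmx_eq0.
by exists l; rewrite -{1}(trmxK M) -trmx_mul hu linearZ.
Qed.

Lemma eig_share (M N : M2) (v : 'cV[F]_2) l : ~ (exists k, M = k%:M) -> N * M = M * N ->
  M *m v = l *: v -> exists c, N *m v = c *: v.
Proof.
move=> ns NM E; have [//|[p [q ->]]] := commutant NM.
exists (p * l + q).
by rewrite mulmxDl -scalemxAl E mul_scalar_mx scalerA scalerDl.
Qed.

End Closed.

Section Cj.
Variable T : unitRingType.
Definition cj (Q M : T) := Q^-1 * M * Q.

Lemma cjM Q M N : Q \is a GRing.unit -> cj Q (M * N) = cj Q M * cj Q N.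
Proof. by move=> u; rewrite /cj !mulrA mulrK. Qed.

Lemma cjV Q M : Q \is a GRing.unit -> M \is a GRing.unit -> (cj Q M)^-1 = cj Q M^-1.
Proof.
move=> uQ uM; rewrite /cj invrM ?unitrMr ?unitrV // invrM ?unitrV // invrK.
by rewrite mulrA.
Qed.

Lemma cjXn Q M (m : nat) : Q \is a GRing.unit -> (cj Q M) ^+ m = cj Q (M ^+ m).
Proof.
move=> u; elim: m => [|m IH]; first by rewrite !expr0 /cj mulr1 mulVr.
by rewrite !exprS IH cjM.
Qed.

Lemma cjXz Q M (k : int) : Q \is a GRing.unit -> M \is a GRing.unit ->
  (cj Q M) ^ k = cj Q (M ^ k).
Proof.
move=> uQ uM; case: k => m /=; first exact: cjXn.
by rewrite !NegzE -!exprnN cjXn // cjV // unitrX.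
Qed.

End Cj.

Section Main.
Variable R : realType.
Local Notation C := (R[i]).
Local Notation M2 := ('M[C]_2).

Lemma two_nz : (2 : C) != 0.
Proof. by rewrite pnatr_eq0. Qed.

Lemma SL_unit (M : M2) : \det M = 1 -> M \is a GRing.unit.
Proof. by move=> d; rewrite unitmxE d unitr1. Qed.

Lemma red_lemma n (r : rep R n) : irreducible_rep r ->
  forall v : 'cV[C]_2, v != 0 ->
  (exists c, rho_a r *m v = c *: v) -> (exists c, rho_b r *m v = c *: v) ->
  (exists c, rho_x r *m v = c *: v) -> (exists c, rho_y r *m v = c *: v) -> False.
Proof.
move=> irr v vnz ea eb ex ey.
have gen : forall s, s \in [:: rho_a r; rho_b r; rho_x r; rho_y r] ->
    s \is a GRing.unit /\ exists c, s *m v = c *: v.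
  move=> s; rewrite !inE => /or4P [] /eqP ->; split => //; apply: SL_unit.
  - exact: rho_a_SL.
  - exact: rho_b_SL.
  - exact: rho_x_SL.
  - exact: rho_y_SL.
have key : forall g, in_image r g -> exists c, g *m v = c *: v.
  move=> g; elim => [|g' s _ [c hc] hs|g' s _ [c hc] hs].
  - by exists 1; rewrite mul1mx scale1r.
  - have [_ [d hd]] := gen s hs.
    by exists (d * c); rewrite -mulmxE -mulmxA hd -scalemxAr hc scalerA mulrC.
  - have [us [d hd]] := gen s hs.
    have [_ hd'] := invr_eig us vnz hd.
    by exists (d^-1 * c); rewrite -mulmxE -mulmxA hd' -scalemxAr hc scalerA mulrC.
have := irr (<[v]>%VS).
case.
- move=> g /key [c hc] w /vlineP [k ->].
  by rewrite -scalemxAr hc scalerA memvZ // memv_line.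
- move=> W0; move: (memv_line v); rewrite W0 memv0 => /eqP v0.
  by rewrite v0 eqxx in vnz.
- move=> Wf; have := dim_vline v; rewrite Wf dimvf vnz.
  by [].
Qed.


Lemma scal_comm (q : C) (M : M2) : M * q%:M = q%:M * M.
Proof. by rewrite -!mulmxE scalar_mxC. Qed.

Lemma commXz (M : M2) (k : int) : M \is a GRing.unit -> M * M ^ k = M ^ k * M.
Proof.
move=> u; by rewrite -{1}[M]expr1z -exprzDr // addrC exprzDr // expr1z.
Qed.

Lemma comm_inv (A Y : M2) : Y \is a GRing.unit -> A * Y^-1 = Y^-1 * A -> A * Y = Y * A.
Proof.
move=> uY h.
have : Y * (A * Y^-1) * Y = Y * (Y^-1 * A) * Y by rewrite h.
by rewrite mulrA mulrVK // mulVKr.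
Qed.

Lemma mx_cols (M : M2) v0 v1 w0 w1 a0 a1 b0 b1 :
  M *m vec2 v0 v1 = vec2 a0 a1 -> M *m vec2 w0 w1 = vec2 b0 b1 ->
  M * mx2 v0 w0 v1 w1 = mx2 a0 b0 a1 b1.
Proof.
rewrite [M]mx2E !mul_mx2_vec2 mul_mx2 => /vec2_inj [-> ->] /vec2_inj [-> ->].
by [].
Qed.

Lemma nf (n : int) (A B X Y : M2) (dA : \det A = 1) (dB : \det B = 1)
  (dX : \det X = 1) (dY : \det Y = 1)
  (H1 : A ^+ 2 = B ^ (2 * n + 1)) (H2 : X^-1 * Y * X = Y^-1)
  (H3 : B ^ (- n) * A = Y^-1) (H4 : A ^+ 2 = Y^-1 * X ^+ 2)
  (Hirr : forall v : 'cV[C]_2, v != 0 -> (exists c, A *m v = c *: v) ->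
     (exists c, B *m v = c *: v) -> (exists c, X *m v = c *: v) ->
     (exists c, Y *m v = c *: v) -> False) :
  exists P l, [/\ P \is a GRing.unit, l != 0, Y = P * mx2 l 0 0 l^-1 * P^-1,
    X = P * mx2 0 (-1) 1 0 * P^-1 & (B = Y^-1 * Y^-1 /\ A = B ^ n * Y^-1)].
Proof.
have uA := SL_unit dA; have uB := SL_unit dB.
have uX := SL_unit dX; have uY := SL_unit dY.
have uBn : B ^ n \is a GRing.unit by apply: unitXz.
have YX : Y * X = X * Y^-1 by rewrite -H2 !mulrA mulrV // mul1r.
have YiX : Y^-1 * X = X * Y.
  by apply: (mulrI uY); rewrite mulVKr // mulrA YX mulrVK.
have X2Y : X ^+ 2 * Y = Y * X ^+ 2.
  by rewrite expr2 -mulrA -YiX !mulrA -YX.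
have ABn : A = B ^ n * Y^-1.
  by rewrite -H3 -invr_expz mulrA mulrV // mul1r.
have nsc : forall v : 'cV[C]_2, v != 0 -> forall M : M2, forall k : C, M = k%:M ->
    exists c, M *m v = c *: v.
  by move=> v _ M k ->; exists k; rewrite mul_scalar_mx.
have [[k X2k]|ns] := Classical_Prop.classic (exists k, X ^+ 2 = k%:M); last first.
  have [[k hk]|[p [q hY]]] := commutant (esym X2Y); first by case: ns; exists k.
  have XY : X * Y = Y * X.
    rewrite hY mulrDr mulrDl -scalerAr -scalerAl -exprS -exprSr scal_comm //.
  have Yi : Y^-1 = Y by rewrite -H2 -mulrA -XY mulKr.
  have YY : Y * Y = 1 by rewrite -{1}Yi mulVr.
  have [e Ye] := sq1_scalar two_nz dY YY.
  have A2 : A ^+ 2 = Y * X ^+ 2 by rewrite H4 Yi.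
  have AX : A * X ^+ 2 = X ^+ 2 * A.
    apply: (mulrI uY); rewrite mulrA {1}Ye -scal_comm -Ye -mulrA -A2.
    by rewrite -exprS (exprSr A 2) A2 -mulrA.
  have BX : B * X ^+ 2 = X ^+ 2 * B.
    have hb : B * A ^+ 2 = A ^+ 2 * B by rewrite H1 commXz.
    apply: (mulrI uY); rewrite mulrA {1}Ye -scal_comm -Ye -mulrA -A2.
    by rewrite hb A2 -mulrA.
  have [v vnz [l hl]] := eig_exists (X ^+ 2).
  exfalso; apply: (Hirr v vnz).
  - exact: (eig_share ns AX hl).
  - exact: (eig_share ns BX hl).
  - exact: (eig_share ns (commrX 2 (commr_refl X)) hl).
  - exact: (nsc v vnz _ _ Ye).
have dk : k ^+ 2 = 1.
  by rewrite -(det_scalar 2 k) -X2k expr2 -mulmxE det_mulmx dX mulr1.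
move/eqP: dk; rewrite sqrf_eq1 => /orP [] /eqP k1; rewrite k1 in X2k.
  have XX : X * X = 1 by rewrite -expr2 X2k.
  have [d Xd] := sq1_scalar two_nz dX XX.
  have XY : X * Y = Y * X by rewrite Xd scal_comm.
  have Yi : Y^-1 = Y by rewrite -H2 -mulrA -XY mulKr.
  have YY : Y * Y = 1 by rewrite -{1}Yi mulVr.
  have [e Ye] := sq1_scalar two_nz dY YY.
  have B1 : B = 1.
    have : B ^ n * B ^ n * B = B ^ n * B ^ n.
      have -> : B ^ n * B ^ n * B = B ^ (2 * n + 1).
        have -> : 2 * n + 1 = n + n + 1 by ring.
        by rewrite !exprzDr // expr1z.
      rewrite -H1 ABn Yi expr2 -mulrA (mulrA Y) {1}Ye -scal_comm -Ye.
      by rewrite -!mulrA YY mulr1.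
    move/(congr1 (fun M => (B ^ n * B ^ n)^-1 * M)).
    by rewrite mulrA mulVr ?mul1r // unitrMl uBn.
  have Ae : A = e%:M by rewrite ABn B1 exp1rz mul1r Yi.
  have v0 : vec2 1 0 != 0 :> 'cV[C]_2 by rewrite vec2_eq0 oner_eq0.
  exfalso; apply: (Hirr _ v0).
  - exact: (nsc _ v0 _ _ Ae).
  - by apply: (nsc _ v0 _ 1); rewrite B1.
  - exact: (nsc _ v0 _ _ Xd).
  - exact: (nsc _ v0 _ _ Ye).
have X2 : X ^+ 2 = -1 by rewrite X2k rmorphN1.
have A2 : A ^+ 2 = - Y^-1 by rewrite H4 X2 mulrN1.
have AY : A * Y = Y * A.
  apply: comm_inv => //.
  have : A * A ^+ 2 = A ^+ 2 * A by rewrite -exprS (exprSr A 2).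
  by rewrite A2 mulrN mulNr => /oppr_inj.
have Bn : B ^ n = A * Y by rewrite ABn mulrVK.
have BB : B ^ n * B ^ n = - Y.
  by rewrite Bn mulrA -(mulrA A Y) -AY mulrA -expr2 A2 mulNr mulVr // mulN1r.
have HB : B = Y^-1 * Y^-1.
  have : B ^ (2 * n + 1) = - Y * B.
    have -> : 2 * n + 1 = n + n + 1 by ring.
    by rewrite !exprzDr // expr1z BB.
  rewrite -H1 A2 mulNr => /oppr_inj hYB.
  by rewrite {2}hYB mulKr.
have [v vnz [l hl]] := eig_exists Y.
have [lnz hli] := invr_eig uY vnz hl.
set w := X *m v.
have hw : Y *m w = l^-1 *: w.
  by rewrite /w mulmxA -[Y *m X]/(Y * X) YX -mulmxE -mulmxA hli -scalemxAr.
have hXw : X *m w = - v.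
  by rewrite /w mulmxA -[X *m X]/(X * X) -expr2 X2 mulNmx mul1mx.
have Bv : B *m v = (l^-1 * l^-1) *: v.
  by rewrite HB -mulmxE -mulmxA hli -scalemxAr hli scalerA.
have Av : exists c, A *m v = c *: v.
  exists ((l^-1 * l^-1) ^ n * l^-1).
  by rewrite ABn -mulmxE -mulmxA hli -scalemxAr (expz_eig n uB vnz Bv) scalerA mulrC.
have hXv : X *m v = w by [].
move: hl hli hw hXw Bv Av vnz hXv; rewrite (vec2E v) (vec2E w).
move: (v 0 0) (v 1 0) (w 0 0) (w 1 0) => v0 v1 w0 w1.
move=> hl hli hw hXw Bv Av vnz hXv.
have [dz|dnz] := eqVneq (v0 * w1 - w0 * v1) 0.
  exfalso; apply: (Hirr _ vnz) => //.
  - by exists (l^-1 * l^-1).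
  - rewrite hXv; move: vnz; rewrite vec2_eq0 negb_and => /orP [] vnz.
      exists (w0 / v0); rewrite scale_vec2; congr vec2; first by field.
      apply: (eq_via (k := 1/v0) dz); field; exact vnz.
    exists (w1 / v1); rewrite scale_vec2; congr vec2; last by field.
    apply: (eq_via (k := -1/v1) dz); field; exact vnz.
  - by exists l.
have uP : mx2 v0 w0 v1 w1 \is a GRing.unit.
  by rewrite unitmxE det_mx2 unitfE.
exists (mx2 v0 w0 v1 w1), l; split => //.
- have YP : Y * mx2 v0 w0 v1 w1 = mx2 v0 w0 v1 w1 * mx2 l 0 0 l^-1.
    rewrite scale_vec2 in hl; rewrite scale_vec2 in hw.
    rewrite mul_mx2 (mx_cols hl hw).
    by apply: mx2_eq; ring.
  by rewrite -YP mulrK.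
- have XP : X * mx2 v0 w0 v1 w1 = mx2 v0 w0 v1 w1 * mx2 0 (-1) 1 0.
    rewrite -scaleN1r scale_vec2 in hXw.
    rewrite mul_mx2 (mx_cols hXv hXw).
    by apply: mx2_eq; ring.
  by rewrite -XP mulrK.
Qed.


Lemma eig_diag (P : M2) d1 d2 a : P \is a GRing.unit ->
  eigenvalue (P * mx2 d1 0 0 d2 * P^-1) a -> a = d1 \/ a = d2.
Proof.
move=> uP /eigenvalueP [u hu unz].
have ht : (u *m P) *m mx2 d1 0 0 d2 = a *: (u *m P).
  rewrite scalemxAl -hu -!mulmxA; congr (_ *m _).
  by rewrite -[P^-1 *m P]/(P^-1 * P) mulVr // mulmx1.
have tnz : u *m P != 0.
  apply: contra unz => /eqP t0.
  have -> : u = (u *m P) *m P^-1 by rewrite -mulmxA -[P *m P^-1]/(P * P^-1) mulrV // mulmx1.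
  by rewrite t0 mul0mx.
move: ht tnz; rewrite (row2E (u *m P)); move: (_ 0 0) (_ 0 1) => t0 t1.
rewrite mul_row2_mx2 scale_row2 row2_eq0 negb_and => /row2_inj [e1 e2] /orP [] tnz.
  left; apply: (mulfI tnz); rewrite mulrC -e1; ring.
right; apply: (mulfI tnz); rewrite mulrC -e2; ring.
Qed.

Lemma eig_diag1 (P : M2) d1 d2 : P \is a GRing.unit ->
  eigenvalue (P * mx2 d1 0 0 d2 * P^-1) d1.
Proof.
move=> uP; apply/eigenvalueP; exists (row2 1 0 *m P^-1).
  rewrite -!mulmxE !mulmxA -(mulmxA (row2 1 0) P^-1 P) -[P^-1 *m P]/(P^-1 * P) mulVr // mulmx1.
  rewrite mul_row2_mx2 scalemxAl scale_row2.
  by congr (_ *m _); congr row2; ring.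
apply/eqP => /(congr1 (fun u => u *m P)).
rewrite -mulmxA mulmxE mulVr // mul0mx mulmx1 => /eqP.
by rewrite row2_eq0 oner_eq0.
Qed.


Lemma conj_gen (P1 P2 S E : M2) : P1 \is a GRing.unit -> P2 \is a GRing.unit ->
  S \is a GRing.unit ->
  cj (P1 * S * P2^-1) (P1 * E * P1^-1) = P2 * (S^-1 * E * S) * P2^-1.
Proof.
move=> u1 u2 uS; rewrite /cj !invrM ?unitrMl ?unitrMr ?unitrV // invrK.
by rewrite !mulrA !mulrVK.
Qed.

Lemma Yinv (P : M2) l : P \is a GRing.unit -> l != 0 ->
  (P * mx2 l 0 0 l^-1 * P^-1)^-1 = P * mx2 l^-1 0 0 l * P^-1.
Proof.
move=> uP lnz.
have dD : l * l^-1 - 0 * 0 = 1 by rewrite mulr0 subr0 mulfV.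
have uD : mx2 l 0 0 l^-1 \is a GRing.unit by rewrite unitmxE det_mx2 dD unitr1.
rewrite !invrM ?unitrMr ?unitrV // invrK inv_mx2 // oppr0.
by rewrite !mulrA.
Qed.

Definition Kmx : M2 := mx2 0 (-1) 1 0.

Lemma uK : Kmx \is a GRing.unit.
Proof. by rewrite unitmxE det_mx2 mul0r mulr1 sub0r opprK unitr1. Qed.

Lemma rep_nf n (r : rep R n) : irreducible_rep r ->
  exists P l, [/\ P \is a GRing.unit, l != 0,
    rho_y r = P * mx2 l 0 0 l^-1 * P^-1, rho_x r = P * Kmx * P^-1 &
    (rho_b r = (rho_y r)^-1 * (rho_y r)^-1 /\ rho_a r = rho_b r ^ n * (rho_y r)^-1)].
Proof.
move=> irr.
apply: (nf (rho_a_SL r) (rho_b_SL r) (rho_x_SL r) (rho_y_SL r) (rel_torus r)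
  (rel_klein r) (rel_mu r) (rel_h r)).
exact: red_lemma irr.
Qed.

Lemma finish n (r1 r2 : rep R n) (Q : M2) : Q \is a GRing.unit ->
  rho_b r1 = (rho_y r1)^-1 * (rho_y r1)^-1 -> rho_a r1 = rho_b r1 ^ n * (rho_y r1)^-1 ->
  rho_b r2 = (rho_y r2)^-1 * (rho_y r2)^-1 -> rho_a r2 = rho_b r2 ^ n * (rho_y r2)^-1 ->
  rho_y r2 = cj Q (rho_y r1) -> rho_x r2 = cj Q (rho_x r1) -> conj_reps r1 r2.
Proof.
move=> uQ B1 A1 B2 A2 Y2 X2.
have uY1 := SL_unit (rho_y_SL r1).
have uB1 := SL_unit (rho_b_SL r1).
have hB : rho_b r2 = cj Q (rho_b r1).
  by rewrite B2 Y2 (cjV uQ uY1) B1 (cjM _ _ uQ).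
exists Q; split; first exact: uQ.
split.
- change (rho_a r2 = cj Q (rho_a r1)); rewrite A2 hB (cjXz _ uQ uB1) Y2 (cjV uQ uY1) A1 (cjM _ _ uQ).
  by [].
- exact: hB.
- exact: X2.
- exact: Y2.
Qed.

End Main.

Theorem lemma3p5 (R : realType) (n : int) (hn0 : n <> 0) (hn1 : n <> -1)
    (r1 r2 : rep R n) :
  irreducible_rep r1 -> irreducible_rep r2 ->
  (forall lam : R[i], eigenvalue (rho_mu r1) lam = eigenvalue (rho_mu r2) lam) ->
  conj_reps r1 r2.
Proof.
move=> irr1 irr2 heig.
have [P1 [l1 [u1 l1nz Y1 X1 [B1 A1]]]] := rep_nf irr1.
have [P2 [l2 [u2 l2nz Y2 X2 [B2 A2]]]] := rep_nf irr2.
have mu1 : rho_mu r1 = (rho_y r1)^-1 := rel_mu r1.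
have mu2 : rho_mu r2 = (rho_y r2)^-1 := rel_mu r2.
have e1 : eigenvalue (rho_mu r1) l1^-1.
  by rewrite mu1 Y1 (Yinv u1 l1nz); apply: eig_diag1.
rewrite heig mu2 Y2 (Yinv u2 l2nz) in e1.
have u2i : P2^-1 \is a GRing.unit by rewrite unitrV.
have [e|e] := eig_diag u2 e1.
  have l12 : l1 = l2 by rewrite -[l1]invrK e invrK.
  have uQ : P1 * 1 * P2^-1 \is a GRing.unit.
    by rewrite (unitrMl _ u2i) mulr1.
  apply: (finish uQ B1 A1 B2 A2).
  - rewrite Y1 (@conj_gen R P1 P2 1 _ u1 u2 (unitr1 _)) invr1 mulr1 mul1r Y2 l12.
    reflexivity.
  - rewrite X1 (@conj_gen R P1 P2 1 _ u1 u2 (unitr1 _)) invr1 mulr1 mul1r X2.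
    reflexivity.
have l12 : l1 = l2^-1 by rewrite -[l1]invrK e.
have uQ : P1 * Kmx R * P2^-1 \is a GRing.unit.
  by rewrite (unitrMl _ u2i) (unitrMl _ (uK R)).
apply: (finish uQ B1 A1 B2 A2).
- rewrite Y1 (@conj_gen R P1 P2 (Kmx R) _ u1 u2 (uK R)) Y2; congr (_ * _ * _).
  rewrite /Kmx inv_mx2; last by ring.
  rewrite !mul_mx2 l12 invrK; apply: mx2_eq; ring.
- rewrite X1 (@conj_gen R P1 P2 (Kmx R) _ u1 u2 (uK R)) (mulVr (uK R)) mul1r X2.
  reflexivity.
Qed.
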